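(* Let $\alpha\in(0,\pi]$ and $x,y\in S_\alpha$ with $|y|\le|x|$. Then \[ k_{S_\alpha}(x,y)\ge\frac{1}{\sin\frac{\alpha}{2}}\log\frac{|x|}{|y|}. \]
   Context: $S_\alpha=\{\rho e^{it}:\rho>0,\ t\in(0,\alpha)\}\subset\mathbb{C}$. For a domain $G\subsetneq\mathbb{R}^2$, $k_G(x,y)=\inf_\gamma\int_\gamma\frac{|dz|}{d(z,\partial G)}$, the infimum over rectifiable curves $\gamma\subset G$ joining $x$ and $y$ (quasihyperbolic distance). *)

(* Defs.v *)
From Stdlib Require Import Reals Lra Lia ClassicalEpsilon.
Open Scope R_scope.

Definition pt := (R * R)%type.

Definition cnorm (z : pt) : R := sqrt (fst z ^ 2 + snd z ^ 2).
Definition cdist (z w : pt) : R :=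
  sqrt ((fst z - fst w) ^ 2 + (snd z - snd w) ^ 2).

Definition sector (alpha : R) (z : pt) : Prop :=
  exists rho t, 0 < rho /\ 0 < t < alpha /\ z = (rho * cos t, rho * sin t).

(* Greatest lower bound / least upper bound of a set of reals,
   chosen by classical choice (meaningful when they exist). *)
Definition is_glb_R (A : R -> Prop) (r : R) : Prop :=
  (forall a, A a -> r <= a) /\ (forall s, (forall a, A a -> s <= a) -> s <= r).
Definition Inf_R (A : R -> Prop) : R :=
  epsilon (inhabits 0) (fun r => is_glb_R A r).
Definition Sup_R (A : R -> Prop) : R :=
  epsilon (inhabits 0) (fun r => is_lub A r).

Definition boundary (G : pt -> Prop) (w : pt) : Prop :=
  forall eps, 0 < eps ->
    (exists z, G z /\ cdist z w < eps) /\ (exists z, ~ G z /\ cdist z w < eps).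

Definition dist_set (A : pt -> Prop) (z : pt) : R :=
  Inf_R (fun s => exists w, A w /\ s = cdist z w).

Fixpoint sumR (n : nat) (f : nat -> R) : R :=
  match n with
  | O => 0
  | S k => sumR k f + f k
  end.

Definition partition01 (n : nat) (p : nat -> R) : Prop :=
  p O = 0 /\ p n = 1 /\ (forall i, (i < n)%nat -> p i <= p (S i)).

Definition curve_in (G : pt -> Prop) (gamma : R -> pt) (x y : pt) : Prop :=
  gamma 0 = x /\ gamma 1 = y /\
  (forall t, 0 <= t <= 1 -> G (gamma t)) /\
  (forall t, 0 <= t <= 1 -> forall eps, 0 < eps -> exists delta, 0 < delta /\
     forall s, 0 <= s <= 1 -> Rabs (s - t) < delta -> cdist (gamma s) (gamma t) < eps).

Definition rectifiable (gamma : R -> pt) : Prop :=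
  exists B, forall n p, partition01 n p ->
    sumR n (fun i => cdist (gamma (p (S i))) (gamma (p i))) <= B.

(* Lower Darboux-Stieltjes sums of  |dz| / d(z, boundary G)  along gamma:
   m i is any lower bound of the weight on the i-th subarc. *)
Definition qh_lower_sum (G : pt -> Prop) (gamma : R -> pt) (v : R) : Prop :=
  exists n p m, partition01 n p /\
    (forall i, (i < n)%nat -> forall t, p i <= t <= p (S i) ->
        m i <= / dist_set (boundary G) (gamma t)) /\
    v = sumR n (fun i => m i * cdist (gamma (p (S i))) (gamma (p i))).

(* Quasihyperbolic length  int_gamma |dz| / d(z, boundary G)
   (supremum of lower sums; the weight is continuous). *)
Definition qh_length (G : pt -> Prop) (gamma : R -> pt) : R :=
  Sup_R (qh_lower_sum G gamma).

Definition k_dist (G : pt -> Prop) (x y : pt) : R :=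
  Inf_R (fun v => exists gamma, curve_in G gamma x y /\ rectifiable gamma /\
                                v = qh_length G gamma).

(* Main.v *)
Require Import Defs.
From Stdlib Require Import Reals Lra Lia ClassicalEpsilon Classical.
Open Scope R_scope.

Lemma lin_le (a b u v : R) : a*a + b*b = 1 -> u*a + v*b <= sqrt (u^2 + v^2).
Proof.
  intros H.
  destruct (Rle_lt_dec (u*a+v*b) 0).
  - pose proof (sqrt_pos (u^2+v^2)); lra.
  - rewrite <- (sqrt_Rsqr (u*a+v*b)) by lra.
    apply sqrt_le_1_alt. unfold Rsqr.
    assert (E: (u*a+v*b)*(u*a+v*b) + (u*b - v*a)^2 = (u^2+v^2)*(a*a+b*b)) by ring.
    rewrite H, Rmult_1_r in E. pose proof (pow2_ge_0 (u*b-v*a)). lra.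
Qed.

Lemma cdist_ge0 z w : 0 <= cdist z w.
Proof. apply sqrt_pos. Qed.

Lemma cdist_sym z w : cdist z w = cdist w z.
Proof. unfold cdist; f_equal; ring. Qed.

Lemma cdist_refl z : cdist z z = 0.
Proof. unfold cdist. replace ((fst z - fst z) ^ 2 + (snd z - snd z) ^ 2) with 0 by ring. apply sqrt_0. Qed.

Lemma cdist_tri a b c : cdist a c <= cdist a b + cdist b c.
Proof.
  unfold cdist.
  set (x1 := fst a - fst b). set (x2 := snd a - snd b).
  set (y1 := fst b - fst c). set (y2 := snd b - snd c).
  replace (fst a - fst c) with (x1 + y1) by (unfold x1, y1; ring).
  replace (snd a - snd c) with (x2 + y2) by (unfold x2, y2; ring).
  pose proof (sqrt_pos (x1^2+x2^2)). pose proof (sqrt_pos (y1^2+y2^2)).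
  rewrite <- (sqrt_Rsqr (sqrt (x1^2+x2^2) + sqrt (y1^2+y2^2))) by lra.
  apply sqrt_le_1_alt. unfold Rsqr.
  assert (E1: sqrt (x1^2+x2^2) * sqrt (x1^2+x2^2) = x1^2+x2^2) by (apply sqrt_sqrt; nra).
  assert (E2: sqrt (y1^2+y2^2) * sqrt (y1^2+y2^2) = y1^2+y2^2) by (apply sqrt_sqrt; nra).
  assert (CS: x1*y1 + x2*y2 <= sqrt (x1^2+x2^2) * sqrt (y1^2+y2^2)).
  { rewrite <- sqrt_mult by nra.
    destruct (Rle_lt_dec (x1*y1+x2*y2) 0).
    - pose proof (sqrt_pos ((x1 ^ 2 + x2 ^ 2) * (y1 ^ 2 + y2 ^ 2))); lra.
    - rewrite <- (sqrt_Rsqr (x1*y1+x2*y2)) by lra.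
      apply sqrt_le_1_alt. unfold Rsqr.
      assert ((x1 ^ 2 + x2 ^ 2) * (y1 ^ 2 + y2 ^ 2) - (x1*y1+x2*y2)*(x1*y1+x2*y2) = (x1*y2-x2*y1)^2) by ring.
      pose proof (pow2_ge_0 (x1*y2-x2*y1)). lra. }
  nra.
Qed.

Lemma cnorm_cdist z : cnorm z = cdist z (0,0).
Proof. unfold cnorm, cdist; simpl; f_equal; ring. Qed.

Lemma cnorm_diff u v : cnorm u - cnorm v <= cdist u v.
Proof.
  rewrite !cnorm_cdist. pose proof (cdist_tri u v (0,0)). lra.
Qed.

Definition L1 (z : pt) := snd z.
Definition L2 (al : R) (z : pt) := fst z * sin al - snd z * cos al.

Lemma L1_lip z u : L1 z - L1 u <= cdist z u.
Proof.
  unfold L1, cdist. pose proof (lin_le 0 1 (fst z - fst u) (snd z - snd u)). 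
  assert (H1: 0*0+1*1 = 1) by ring. specialize (H H1). lra.
Qed.

Lemma L2_lip al z u : L2 al z - L2 al u <= cdist z u.
Proof.
  unfold L2, cdist. pose proof (lin_le (sin al) (- cos al) (fst z - fst u) (snd z - snd u)).
  assert (H1: sin al * sin al + - cos al * - cos al = 1) by (pose proof (sin2_cos2 al); unfold Rsqr in *; lra).
  specialize (H H1). lra.
Qed.

Lemma sector_fwd al z : 0 < al <= PI -> sector al z -> 0 < L1 z /\ 0 < L2 al z.
Proof.
  intros Hal [rho [t [Hr [Ht ->]]]]. unfold L1, L2; simpl. split.
  - apply Rmult_lt_0_compat; auto. apply sin_gt_0; lra.
  - assert (E: rho * cos t * sin al - rho * sin t * cos al = rho * sin (al - t)) by (rewrite sin_minus; ring).
    rewrite E. apply Rmult_lt_0_compat; auto. apply sin_gt_0; lra.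
Qed.

Lemma sector_bwd al z : 0 < al <= PI -> 0 < L1 z -> 0 < L2 al z -> sector al z.
Proof.
  intros Hal H1 H2. destruct z as [a b]. unfold L1, L2 in *; simpl in *.
  set (rho := sqrt (a^2+b^2)).
  assert (Hrho: 0 < rho) by (apply sqrt_lt_R0; nra).
  assert (Hrr: rho * rho = a^2+b^2) by (apply sqrt_sqrt; nra).
  assert (Hlt: a < rho).
  { destruct (Rle_lt_dec a 0). lra. nra. }
  assert (Hgt: - rho < a).
  { destruct (Rle_lt_dec a 0). nra. lra. }
  assert (Hb: -1 <= a/rho <= 1).
  { split; [apply (Rmult_le_reg_r rho); auto; unfold Rdiv; rewrite Rmult_assoc, Rinv_l; lra|].
    apply (Rmult_le_reg_r rho); auto; unfold Rdiv; rewrite Rmult_assoc, Rinv_l; lra. }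
  set (t := acos (a/rho)).
  assert (Ct: cos t = a/rho) by (apply cos_acos; auto).
  assert (St: sin t = b/rho).
  { unfold t. rewrite sin_acos by auto.
    rewrite <- (sqrt_Rsqr (b/rho)).
    2:{ unfold Rdiv. apply Rmult_le_pos; [lra| left; apply Rinv_0_lt_compat; auto]. }
    f_equal. unfold Rsqr.
    apply (Rmult_eq_reg_r (rho*rho)); [|nra].
    field_simplify; [|lra|lra]. replace (rho^2) with (rho*rho) by ring. rewrite Hrr. ring. }
  pose proof (acos_bound (a/rho)) as Hab. fold t in Hab.
  assert (Hsin: 0 < sin t) by (rewrite St; apply Rdiv_lt_0_compat; auto).
  assert (t0: 0 < t).
  { destruct Hab as [[?|E] _]; auto. rewrite <- E in Hsin. rewrite sin_0 in Hsin. lra. }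
  assert (tPI: t < PI).
  { destruct Hab as [_ [?|E]]; auto. rewrite E in Hsin. rewrite sin_PI in Hsin. lra. }
  assert (Hs: 0 < sin (al - t)).
  { rewrite sin_minus, Ct, St.
    replace (sin al * (a / rho) - cos al * (b / rho)) with ((a * sin al - b * cos al) / rho) by (field; lra).
    apply Rdiv_lt_0_compat; auto. }
  exists rho, t. split; auto. split.
  - split; auto. destruct (Rle_lt_dec al t); auto.
    pose proof (sin_ge_0 (t - al)). rewrite <- (Ropp_minus_distr t al), sin_neg in Hs. 
    assert (0 <= sin (t - al)) by (apply H; lra). lra.
  - rewrite Ct, St. f_equal; field; lra.
Qed.

Lemma cnorm_polar rho t : 0 <= rho -> cnorm (rho * cos t, rho * sin t) = rho.
Proof.
  intros H. unfold cnorm. cbn [fst snd].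
  pose proof (sin2_cos2 t). unfold Rsqr in H0.
  replace ((rho * cos t) ^ 2 + (rho * sin t) ^ 2) with (rho * rho) by (simpl; nra).
  apply sqrt_square; auto.
Qed.

Lemma glb_exists (A : R -> Prop) : (exists a, A a) -> (exists m, forall a, A a -> m <= a) ->
  is_glb_R A (Inf_R A).
Proof.
  intros [a Ha] [m Hm]. unfold Inf_R. apply epsilon_spec.
  destruct (completeness (fun x => A (-x))) as [l [Hl1 Hl2]].
  - exists (-m). intros x Hx. specialize (Hm _ Hx). lra.
  - exists (-a). rewrite Ropp_involutive; auto.
  - exists (-l). split.
    + intros b Hb. assert (-b <= l) by (apply Hl1; rewrite Ropp_involutive; auto). lra.
    + intros s Hs. assert (l <= -s). { apply Hl2. intros x Hx. specialize (Hs _ Hx). lra. } lra.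
Qed.

Lemma lub_exists (A : R -> Prop) : (exists a, A a) -> (exists M, forall a, A a -> a <= M) ->
  is_lub A (Sup_R A).
Proof.
  intros Hn [M HM]. unfold Sup_R. apply epsilon_spec.
  destruct (completeness A) as [l Hl]. exists M. intros x Hx; auto. auto. exists l; auto.
Qed.

Lemma not_sector al u : 0 < al <= PI -> ~ sector al u -> L1 u <= 0 \/ L2 al u <= 0.
Proof.
  intros Hal H. destruct (Rle_lt_dec (L1 u) 0); auto. destruct (Rle_lt_dec (L2 al u) 0); auto.
  exfalso; apply H; apply sector_bwd; auto.
Qed.

Lemma bnd_lower al z w : 0 < al <= PI -> sector al z -> boundary (sector al) w ->
  Rmin (L1 z) (L2 al z) <= cdist z w.
Proof.
  intros Hal Hz Hw. destruct (Rle_lt_dec (Rmin (L1 z) (L2 al z)) (cdist z w)) as [|Hlt]; auto.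
  exfalso. destruct (Hw (Rmin (L1 z) (L2 al z) - cdist z w)) as [_ [u [Hu Hd]]]; [lra|].
  pose proof (cdist_tri z w u). rewrite (cdist_sym w u) in H.
  pose proof (Rmin_l (L1 z) (L2 al z)). pose proof (Rmin_r (L1 z) (L2 al z)).
  destruct (not_sector al u Hal Hu).
  - pose proof (L1_lip z u). lra.
  - pose proof (L2_lip al z u). lra.
Qed.

Lemma cdist_scale (w z : pt) (s : R) : 0 <= s ->
  cdist (fst w + s * (fst z - fst w), snd w + s * (snd z - snd w)) w = s * cdist z w.
Proof.
  intros Hs. unfold cdist; cbn [fst snd].
  replace ((fst w + s * (fst z - fst w) - fst w) ^ 2 + (snd w + s * (snd z - snd w) - snd w) ^ 2)
    with ((s*s) * ((fst z - fst w) ^ 2 + (snd z - snd w) ^ 2)) by ring.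
  rewrite sqrt_mult_alt by nra. rewrite sqrt_square; auto.
Qed.

Lemma bnd_point al z w : 0 < al <= PI -> sector al z -> 0 <= L1 w -> 0 <= L2 al w ->
  (L1 w = 0 \/ L2 al w = 0) -> boundary (sector al) w.
Proof.
  intros Hal Hz H1 H2 H0 eps Heps. pose proof (sector_fwd al z Hal Hz) as [Z1 Z2].
  split.
  - pose proof (cdist_ge0 z w). set (D := cdist z w) in *.
    set (s := eps / (eps + D + 1)).
    assert (Hs0: 0 < s) by (unfold s; apply Rdiv_lt_0_compat; lra).
    assert (Hs1: s < 1) by (unfold s; apply (Rmult_lt_reg_r (eps+D+1)); [lra|]; unfold Rdiv; rewrite Rmult_assoc, Rinv_l; lra).
    assert (HsD: s * D < eps).
    { unfold s. unfold Rdiv. rewrite Rmult_comm, <- Rmult_assoc.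
      apply (Rmult_lt_reg_r (eps+D+1)); [lra|]. rewrite Rmult_assoc, Rinv_l by lra. nra. }
    exists (fst w + s * (fst z - fst w), snd w + s * (snd z - snd w)). split.
    + apply sector_bwd; auto; unfold L1, L2 in *; cbn [fst snd] in *.
      * replace (snd w + s * (snd z - snd w)) with ((1-s) * snd w + s * snd z) by ring.
        assert (0 <= (1-s) * snd w) by (apply Rmult_le_pos; lra).
        assert (0 < s * snd z) by (apply Rmult_lt_0_compat; lra). lra.
      * replace ((fst w + s * (fst z - fst w)) * sin al - (snd w + s * (snd z - snd w)) * cos al)
          with ((1-s) * (fst w * sin al - snd w * cos al) + s * (fst z * sin al - snd z * cos al)) by ring.
        assert (0 <= (1-s) * (fst w * sin al - snd w * cos al)) by (apply Rmult_le_pos; lra).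
        assert (0 < s * (fst z * sin al - snd z * cos al)) by (apply Rmult_lt_0_compat; lra). lra.
    + rewrite cdist_scale by lra. auto.
  - exists w. rewrite cdist_refl. split; auto. intros Hw. pose proof (sector_fwd al w Hal Hw). lra.
Qed.

Lemma near_bnd al z : 0 < al <= PI -> sector al z ->
  exists w, boundary (sector al) w /\ cdist z w <= cnorm z * sin (al/2).
Proof.
  intros Hal Hz. pose proof Hz as [rho [t [Hr [Ht Ez]]]].
  assert (Hn: cnorm z = rho) by (rewrite Ez; apply cnorm_polar; lra).
  rewrite Hn. pose proof PI_RGT_0.
  assert (Hsa: 0 <= sin al) by (apply sin_ge_0; lra).
  destruct (Rle_lt_dec t (al/2)).
  - exists (rho * cos t, 0). split.
    + apply (bnd_point al z); auto; unfold L1, L2; cbn [fst snd].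
      * lra.
      * assert (0 <= cos t) by (apply cos_ge_0; lra).
        assert (0 <= rho * cos t * sin al) by (apply Rmult_le_pos; [apply Rmult_le_pos|]; lra). lra.
    + rewrite Ez. unfold cdist; cbn [fst snd].
      replace ((rho * cos t - rho * cos t) ^ 2 + (rho * sin t - 0) ^ 2) with ((rho * sin t) * (rho * sin t)) by ring.
      assert (0 <= sin t) by (apply sin_ge_0; lra).
      rewrite sqrt_square by (apply Rmult_le_pos; lra).
      apply Rmult_le_compat_l; [lra|]. apply sin_incr_1; lra.
  - set (s := al - t). assert (Et: t = al - s) by (unfold s; ring).
    set (c := rho * cos s).
    assert (Hc: 0 <= c) by (unfold c; assert (0 <= cos s) by (apply cos_ge_0; unfold s; lra); apply Rmult_le_pos; lra).
    exists (c * cos al, c * sin al). split.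
    + apply (bnd_point al z); auto; unfold L1, L2; cbn [fst snd].
      * apply Rmult_le_pos; lra.
      * right; ring.
      * right; ring.
    + rewrite Ez, Et. unfold cdist; cbn [fst snd]. rewrite cos_minus, sin_minus. unfold c.
      replace ((rho * (cos al * cos s + sin al * sin s) - rho * cos s * cos al) ^ 2 +
               (rho * (sin al * cos s - cos al * sin s) - rho * cos s * sin al) ^ 2)
        with ((rho * sin s) * (rho * sin s) * (sin al * sin al + cos al * cos al)) by ring.
      pose proof (sin2_cos2 al) as E2. unfold Rsqr in E2. rewrite E2, Rmult_1_r.
      assert (0 <= sin s) by (apply sin_ge_0; unfold s; lra).
      rewrite sqrt_square by (apply Rmult_le_pos; lra).
      apply Rmult_le_compat_l; [lra|]. apply sin_incr_1; unfold s; lra.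
Qed.

Definition dG al z := dist_set (boundary (sector al)) z.

Lemma dG_glb al z : 0 < al <= PI -> sector al z ->
  is_glb_R (fun s => exists w, boundary (sector al) w /\ s = cdist z w)
           (dG al z).
Proof.
  intros Hal Hz. unfold dG, dist_set. apply glb_exists.
  - destruct (near_bnd al z Hal Hz) as [w [Hw _]]. exists (cdist z w), w; auto.
  - exists 0. intros a [w [_ ->]]. apply cdist_ge0.
Qed.

Lemma dG_lower al z : 0 < al <= PI -> sector al z -> Rmin (L1 z) (L2 al z) <= dG al z.
Proof.
  intros Hal Hz. destruct (dG_glb al z Hal Hz) as [_ H]. apply H.
  intros a [w [Hw ->]]. apply bnd_lower; auto.
Qed.

Lemma dG_pos al z : 0 < al <= PI -> sector al z -> 0 < dG al z.
Proof.
  intros Hal Hz. pose proof (dG_lower al z Hal Hz). destruct (sector_fwd al z Hal Hz).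
  unfold Rmin in H. destruct (Rle_dec (L1 z) (L2 al z)); lra.
Qed.

Lemma dG_upper al z : 0 < al <= PI -> sector al z -> dG al z <= cnorm z * sin (al/2).
Proof.
  intros Hal Hz. destruct (dG_glb al z Hal Hz) as [H _].
  destruct (near_bnd al z Hal Hz) as [w [Hw Hd]].
  eapply Rle_trans; [apply H; exists w; eauto|]. auto.
Qed.

Lemma sumR_le n f g : (forall i, (i < n)%nat -> f i <= g i) -> sumR n f <= sumR n g.
Proof.
  induction n; simpl; intros H. lra.
  assert (f n <= g n) by (apply H; lia). assert (sumR n f <= sumR n g) by (apply IHn; intros; apply H; lia). lra.
Qed.

Lemma sumR_scal n c f : sumR n (fun i => c * f i) = c * sumR n f.
Proof. induction n; simpl. ring. rewrite IHn; ring. Qed.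

Lemma sumR_shift n f : sumR (S n) f = f O + sumR n (fun j => f (S j)).
Proof. induction n; simpl in *. ring. rewrite IHn. ring. Qed.

Lemma sumR_ext n f g : (forall i, (i < n)%nat -> f i = g i) -> sumR n f = sumR n g.
Proof. induction n; simpl; intros H. auto. rewrite IHn, H; auto; intros; apply H; lia. Qed.

Lemma sumR_tele n f : sumR n (fun i => f i - f (S i)) = f O - f n.
Proof. induction n; simpl. ring. rewrite IHn. ring. Qed.

Lemma partition_bounds n p : partition01 n p -> forall i, (i <= n)%nat -> 0 <= p i <= 1.
Proof.
  intros [H0 [H1 H2]] i Hi. split.
  - clear H1. induction i. lra. specialize (H2 i). assert (0 <= p i) by (apply IHi; lia).
    assert (p i <= p (S i)) by (apply H2; lia). lra.
  - rewrite <- H1.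
    assert (Hk: forall k, (i + k <= n)%nat -> p i <= p (i + k)%nat).
    { induction k; intros. rewrite Nat.add_0_r; lra.
      replace (i + S k)%nat with (S (i + k)) by lia.
      assert (p (i+k)%nat <= p (S (i+k))) by (apply H2; lia). assert (p i <= p (i+k)%nat) by (apply IHk; lia). lra. }
    specialize (Hk (n - i)%nat ltac:(lia)). replace (i + (n - i))%nat with n in Hk by lia. exact Hk.
Qed.

Definition clamp (t : R) := Rmax 0 (Rmin 1 t).

Lemma clamp_in t : 0 <= clamp t <= 1.
Proof. unfold clamp, Rmax, Rmin. repeat destruct Rle_dec; lra. Qed.

Lemma clamp_id t : 0 <= t <= 1 -> clamp t = t.
Proof. intros. unfold clamp, Rmax, Rmin. repeat destruct Rle_dec; lra. Qed.

Lemma clamp_lip a b : Rabs (clamp a - clamp b) <= Rabs (a - b).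
Proof. unfold clamp, Rmax, Rmin. repeat destruct Rle_dec; unfold Rabs; repeat destruct Rcase_abs; lra. Qed.

Lemma cont_comp (F : pt -> R) G gamma x y :
  (forall a b, F a - F b <= cdist a b) -> curve_in G gamma x y ->
  forall c, continuity_pt (fun t => F (gamma (clamp t))) c.
Proof.
  intros HF [_ [_ [_ Hc]]] c eps Heps.
  destruct (Hc (clamp c) (clamp_in c) eps Heps) as [d [Hd Hd2]].
  exists d. split; auto. intros t [_ Ht]. simpl in *. unfold Rdist in *.
  pose proof (clamp_lip t c).
  assert (cdist (gamma (clamp t)) (gamma (clamp c)) < eps) by (apply Hd2; [apply clamp_in| lra]).
  pose proof (HF (gamma (clamp t)) (gamma (clamp c))).
  pose proof (HF (gamma (clamp c)) (gamma (clamp t))). rewrite cdist_sym in H2.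
  unfold Rabs; destruct Rcase_abs; lra.
Qed.

Lemma curve_min (F : pt -> R) G gamma x y :
  (forall a b, F a - F b <= cdist a b) -> curve_in G gamma x y ->
  exists c, 0 <= c <= 1 /\ forall t, 0 <= t <= 1 -> F (gamma c) <= F (gamma t).
Proof.
  intros HF Hg. destruct (continuity_ab_min (fun t => F (gamma (clamp t))) 0 1) as [c [H1 H2]].
  lra. intros; eapply cont_comp; eauto.
  exists c. split; auto. intros t Ht. specialize (H1 t Ht). rewrite !clamp_id in H1; auto.
Qed.

Lemma qh_bounded al gamma x y : 0 < al <= PI -> curve_in (sector al) gamma x y -> rectifiable gamma ->
  exists M, forall v, qh_lower_sum (sector al) gamma v -> v <= M.
Proof.
  intros Hal Hg [B HB].
  destruct (curve_min L1 _ _ _ _ L1_lip Hg) as [c1 [Hc1 H1]].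
  destruct (curve_min (L2 al) _ _ _ _ (L2_lip al) Hg) as [c2 [Hc2 H2]].
  destruct Hg as [_ [_ [Hin _]]].
  pose proof (sector_fwd al _ Hal (Hin c1 Hc1)) as [P1 _].
  pose proof (sector_fwd al _ Hal (Hin c2 Hc2)) as [_ P2].
  set (mu := Rmin (L1 (gamma c1)) (L2 al (gamma c2))).
  assert (Hmu: 0 < mu) by (unfold mu, Rmin; destruct Rle_dec; lra).
  assert (Hd: forall t, 0 <= t <= 1 -> mu <= dG al (gamma t)).
  { intros t Ht. eapply Rle_trans; [|apply dG_lower; auto].
    specialize (H1 t Ht). specialize (H2 t Ht). unfold mu, Rmin. repeat destruct Rle_dec; lra. }
  exists (/ mu * B). intros v [n [p [m [Hp [Hm ->]]]]].
  eapply Rle_trans; [|apply Rmult_le_compat_l; [left; apply Rinv_0_lt_compat; auto| apply (HB n p Hp)]].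
  rewrite <- sumR_scal. apply sumR_le. intros i Hi.
  apply Rmult_le_compat_r; [apply cdist_ge0|].
  pose proof (partition_bounds n p Hp i ltac:(lia)).
  pose proof (partition_bounds n p Hp (S i) ltac:(lia)).
  destruct Hp as [_ [_ Hmon]]. specialize (Hmon i Hi).
  eapply Rle_trans; [apply (Hm i Hi (p i)); lra|].
  fold (dG al (gamma (p i))). apply Rinv_le_contravar; [auto|apply Hd; lra].
Qed.

Definition Tl (gamma : R -> pt) (a : R) :=
  Sup_R (fun t => 0 <= t <= 1 /\ a <= cnorm (gamma t)).

Lemma Tl_lub G gamma x y a : curve_in G gamma x y -> a <= cnorm x ->
  is_lub (fun t => 0 <= t <= 1 /\ a <= cnorm (gamma t)) (Tl gamma a).
Proof.
  intros [H0 _] Ha. apply lub_exists.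
  - exists 0. rewrite H0. split; auto; lra.
  - exists 1. intros t [Ht _]. lra.
Qed.

Lemma r_cont G gamma x y t : curve_in G gamma x y -> 0 <= t <= 1 -> forall eps, 0 < eps ->
  exists d, 0 < d /\ forall s, 0 <= s <= 1 -> Rabs (s - t) < d ->
    Rabs (cnorm (gamma s) - cnorm (gamma t)) < eps.
Proof.
  intros [_ [_ [_ Hc]]] Ht eps Heps. destruct (Hc t Ht eps Heps) as [d [Hd Hd2]].
  exists d. split; auto. intros s Hs Hst. specialize (Hd2 s Hs Hst).
  pose proof (cnorm_diff (gamma s) (gamma t)). pose proof (cnorm_diff (gamma t) (gamma s)).
  rewrite cdist_sym in H0. unfold Rabs; destruct Rcase_abs; lra.
Qed.

Lemma Tl_props G gamma x y a : curve_in G gamma x y -> cnorm y <= a <= cnorm x ->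
  0 <= Tl gamma a <= 1 /\ cnorm (gamma (Tl gamma a)) = a /\
  (forall t, Tl gamma a < t <= 1 -> cnorm (gamma t) < a).
Proof.
  intros Hg Ha. pose proof (Tl_lub G gamma x y a Hg (proj2 Ha)) as [Hub Hlub].
  pose proof Hg as [H0 [H1 _]].
  set (T := Tl gamma a) in *.
  assert (HT0: 0 <= T) by (apply Hub; rewrite H0; split; lra).
  assert (HT1: T <= 1) by (apply Hlub; intros t [Ht _]; lra).
  assert (Hafter: forall t, T < t <= 1 -> cnorm (gamma t) < a).
  { intros t Ht. destruct (Rlt_le_dec (cnorm (gamma t)) a); auto.
    assert (t <= T) by (apply Hub; split; lra). lra. }
  split; [lra|]. split; auto.
  apply Rle_antisym.
  - destruct (Req_dec T 1) as [E|NE].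
    + rewrite E, H1. lra.
    + destruct (Rle_lt_dec (cnorm (gamma T)) a) as [|Hgt]; auto. exfalso.
      destruct (r_cont G gamma x y T Hg ltac:(lra) (cnorm (gamma T) - a) ltac:(lra)) as [d [Hd Hd2]].
      set (t := Rmin 1 (T + d/2)).
      assert (T < t <= 1) by (unfold t, Rmin; destruct Rle_dec; lra).
      specialize (Hafter t H). 
      assert (Rabs (t - T) < d) by (unfold t, Rmin; destruct Rle_dec; unfold Rabs; destruct Rcase_abs; lra).
      specialize (Hd2 t ltac:(lra) H2). unfold Rabs in Hd2; destruct Rcase_abs in Hd2; lra.
  - destruct (Rle_lt_dec a (cnorm (gamma T))) as [|Hlt]; auto. exfalso.
    destruct (r_cont G gamma x y T Hg ltac:(lra) (a - cnorm (gamma T)) ltac:(lra)) as [d [Hd Hd2]].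
    assert (T <= T - d/2); [|lra].
    apply Hlub. intros t [Ht Hat].
    assert (t <= T) by (apply Hub; auto).
    destruct (Rle_lt_dec t (T - d/2)); auto. exfalso.
    assert (Rabs (t - T) < d) by (unfold Rabs; destruct Rcase_abs; lra).
    specialize (Hd2 t Ht H2). unfold Rabs in Hd2; destruct Rcase_abs in Hd2; lra.
Qed.

Lemma Tl_mono G gamma x y a a' : curve_in G gamma x y -> a' <= a -> a <= cnorm x ->
  Tl gamma a <= Tl gamma a'.
Proof.
  intros Hg Ha Hx. pose proof (Tl_lub G gamma x y a Hg Hx) as [_ Hlub].
  pose proof (Tl_lub G gamma x y a' Hg ltac:(lra)) as [Hub' _].
  apply Hlub. intros t [Ht Hat]. apply Hub'. split; auto; lra.
Qed.

Lemma ln_ub u : 0 < u -> ln u <= u - 1.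
Proof. intros. pose proof (exp_ineq1_le (ln u)). rewrite exp_ln in H0; lra. Qed.

Lemma term_bound A B R1 s : 0 < R1 -> R1 <= B -> B <= A -> 0 < s ->
  / s * (1 - (A - B) / R1) * (ln A - ln B) <= (A - B) / (s * A).
Proof.
  intros H1 H2 H3 Hs. set (h := A - B).
  assert (EA: ln A - ln B = ln (A / B)).
  { unfold Rdiv. rewrite ln_mult, ln_Rinv; try lra. apply Rinv_0_lt_compat; lra. }
  assert (Lup: ln A - ln B <= h / B).
  { rewrite EA. pose proof (ln_ub (A/B) ltac:(apply Rdiv_lt_0_compat; lra)).
    replace (h / B) with (A / B - 1) by (unfold h; field; lra). auto. }
  assert (Llo: 0 <= ln A - ln B).
  { assert (ln (B / A) <= B / A - 1) by (apply ln_ub; apply Rdiv_lt_0_compat; lra).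
    assert (ln (B/A) = - (ln A - ln B)) by (unfold Rdiv; rewrite ln_mult, ln_Rinv; try lra; apply Rinv_0_lt_compat; lra).
    assert (B / A <= 1) by (apply (Rmult_le_reg_r A); [lra|]; unfold Rdiv; rewrite Rmult_assoc, Rinv_l; lra).
    lra. }
  assert (Hh: 0 <= h) by (unfold h; lra).
  replace (h / (s * A)) with (/ s * (h / A)) by (field; lra).
  rewrite (Rmult_assoc (/ s)). apply Rmult_le_compat_l; [left; apply Rinv_0_lt_compat; auto|].
  fold h. set (Lg := ln A - ln B) in *.
  destruct (Rle_lt_dec (1 - h / R1) 0) as [Hn|Hp].
  - assert ((1 - h/R1) * Lg <= 0) by nra.
    assert (0 <= h / A) by (apply Rmult_le_pos; [lra| left; apply Rinv_0_lt_compat; lra]). lra.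
  - assert (hR: h / A <= h / R1).
    { unfold Rdiv. apply Rmult_le_compat_l; auto. apply Rinv_le_contravar; lra. }
    apply Rle_trans with ((1 - h / R1) * (h / B)).
    + apply Rmult_le_compat_l; lra.
    + apply Rle_trans with ((1 - h / A) * (h / B)).
      * apply Rmult_le_compat_r; [apply Rmult_le_pos; [lra| left; apply Rinv_0_lt_compat; lra]| lra].
      * right. unfold h. field. lra.
Qed.

Lemma cnorm_pos al z : sector al z -> 0 < cnorm z.
Proof. intros [rho [t [Hr [_ ->]]]]. rewrite cnorm_polar; lra. Qed.

Lemma main_sum al gamma x y N : 0 < al <= PI -> curve_in (sector al) gamma x y ->
  cnorm y <= cnorm x -> (1 <= N)%nat ->
  exists v, qh_lower_sum (sector al) gamma v /\
   / sin (al/2) * (1 - (cnorm x - cnorm y) / INR N / cnorm y) * ln (cnorm x / cnorm y) <= v.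
Proof.
  intros Hal Hg Hxy HN.
  pose proof Hg as [Hg0 [Hg1 [Hin _]]].
  set (R0 := cnorm x) in *. set (R1 := cnorm y) in *.
  assert (HR1: 0 < R1) by (unfold R1; rewrite <- Hg1; apply (cnorm_pos al); apply Hin; lra).
  set (s := sin (al/2)).
  assert (Hs: 0 < s) by (apply sin_gt_0; pose proof PI_RGT_0; lra).
  assert (HNr: 0 < INR N) by (apply lt_0_INR; lia).
  set (h := (R0 - R1) / INR N).
  assert (Hh: 0 <= h) by (unfold h; apply Rmult_le_pos; [lra| left; apply Rinv_0_lt_compat; lra]).
  set (a := fun k : nat => R0 - INR k * h).
  assert (HaN: a N = R1) by (unfold a, h; field; lra).
  assert (HaS: forall k, a (S k) = a k - h) by (intros; unfold a; rewrite S_INR; ring).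
  assert (Ha: forall k, (k <= N)%nat -> R1 <= a k <= R0).
  { intros k Hk. unfold a. apply le_INR in Hk. split.
    - rewrite <- HaN. unfold a. assert (0 <= (INR N - INR k) * h) by (apply Rmult_le_pos; lra). lra.
    - assert (0 <= INR k * h) by (apply Rmult_le_pos; [apply pos_INR|lra]). lra. }
  set (T := fun k => Tl gamma (a k)).
  assert (HT: forall k, (k <= N)%nat -> 0 <= T k <= 1 /\ cnorm (gamma (T k)) = a k /\
            (forall t, T k < t <= 1 -> cnorm (gamma t) < a k)).
  { intros k Hk. apply (Tl_props (sector al) gamma x y); auto. }
  assert (HTm: forall k, (k < N)%nat -> T k <= T (S k)).
  { intros k Hk. apply (Tl_mono (sector al) gamma x y); auto. rewrite HaS; lra. apply Ha; lia. }
  set (p := fun i => match i with O => 0 | S j => if (j <=? N)%nat then T j else 1 end).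
  set (m := fun i => match i with O => 0 | S j => if (j <? N)%nat then / (s * a j) else 0 end).
  assert (Hp: partition01 (S (S N)) p).
  { split; [reflexivity|]. split.
    - unfold p; cbv beta iota. destruct (Nat.leb_spec (S N) N); [lia|reflexivity].
    - intros i Hi. destruct i as [|j]; unfold p; cbv beta iota.
      + destruct (Nat.leb_spec 0 N); [|lia]. apply HT; lia.
      + destruct (Nat.leb_spec j N); destruct (Nat.leb_spec (S j) N); try lia.
        * apply HTm; lia.
        * apply HT; lia. }
  exists (sumR (S (S N)) (fun i => m i * cdist (gamma (p (S i))) (gamma (p i)))).
  split.
  - exists (S (S N)), p, m. split; auto. split; auto.
    intros i Hi t Ht.
    pose proof (partition_bounds _ _ Hp i ltac:(lia)).
    pose proof (partition_bounds _ _ Hp (S i) ltac:(lia)).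
    assert (Ht01: 0 <= t <= 1) by lra.
    pose proof (dG_pos al (gamma t) Hal (Hin t Ht01)) as Hdp. unfold dG in Hdp.
    destruct i as [|j].
    + simpl. left. apply Rinv_0_lt_compat; auto.
    + simpl m. destruct (Nat.ltb_spec j N).
      * unfold p in Ht; cbv beta iota in Ht. destruct (Nat.leb_spec j N); [|lia]. destruct (Nat.leb_spec (S j) N); [|lia].
        assert (Hr: cnorm (gamma t) <= a j).
        { destruct (HT j ltac:(lia)) as [_ [E Hafter]].
          destruct (Req_dec t (T j)) as [->|NE]. lra. left. apply Hafter. lra. }
        pose proof (dG_upper al (gamma t) Hal (Hin t Ht01)). unfold dG in H4.
        apply Rinv_le_contravar; auto. rewrite Rmult_comm. 
        eapply Rle_trans; [apply H4|]. apply Rmult_le_compat_r; lra.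
      * left. apply Rinv_0_lt_compat; auto.
  - set (g' := fun i => match i with O => 0 | S j => if (j <? N)%nat then h / (s * a j) else 0 end).
    apply Rle_trans with (sumR (S (S N)) g').
    2:{ apply sumR_le. intros i Hi. destruct i as [|j].
        - unfold g'; simpl. right; ring.
        - unfold g', m. destruct (Nat.ltb_spec j N).
          + unfold p; cbv beta iota. destruct (Nat.leb_spec j N); [|lia]. destruct (Nat.leb_spec (S j) N); [|lia].
            destruct (HT j ltac:(lia)) as [_ [E1 _]]. destruct (HT (S j) ltac:(lia)) as [_ [E2 _]].
            pose proof (cnorm_diff (gamma (T j)) (gamma (T (S j)))). rewrite cdist_sym in H2.
            rewrite E1, E2, HaS in H2.
            assert (0 < a j) by (pose proof (Ha j ltac:(lia)); lra).
            unfold Rdiv. rewrite Rmult_comm. apply Rmult_le_compat_l.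
            * left; apply Rinv_0_lt_compat, Rmult_lt_0_compat; auto.
            * lra.
          + lra. }
    rewrite sumR_shift. unfold g' at 1. rewrite Rplus_0_l.
    simpl sumR at 1.
    replace ((N <? N)%nat) with false by (symmetry; apply Nat.ltb_ge; lia).
    rewrite Rplus_0_r.
    rewrite (sumR_ext N _ (fun j => h / (s * a j))).
    2:{ intros i Hi. destruct (Nat.ltb_spec i N); [reflexivity|lia]. }
    apply Rle_trans with (sumR N (fun j => / s * (1 - h / R1) * (ln (a j) - ln (a (S j))))).
    + rewrite sumR_scal. rewrite (sumR_tele N (fun j => ln (a j))).
      right. f_equal.
      rewrite HaN. unfold a. simpl INR. rewrite Rmult_0_l, Rminus_0_r.
        unfold Rdiv. rewrite ln_mult, ln_Rinv; try lra. apply Rinv_0_lt_compat; lra.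
    + apply sumR_le. intros j Hj.
      replace h with (a j - a (S j)) at 2 by (rewrite HaS; ring).
      replace (h / R1) with ((a j - a (S j)) / R1) by (rewrite HaS; f_equal; ring).
      apply term_bound; auto.
      * apply Ha; lia.
      * rewrite HaS; lra.
Qed.

Lemma qh_ge al gamma x y : 0 < al <= PI -> curve_in (sector al) gamma x y -> rectifiable gamma ->
  cnorm y <= cnorm x -> / sin (al/2) * ln (cnorm x / cnorm y) <= qh_length (sector al) gamma.
Proof.
  intros Hal Hg Hr Hxy.
  assert (Hlub: is_lub (qh_lower_sum (sector al) gamma) (qh_length (sector al) gamma)).
  { unfold qh_length. apply lub_exists.
    - destruct (main_sum al gamma x y 1 Hal Hg Hxy ltac:(lia)) as [v [Hv _]]. eauto.
    - apply (qh_bounded al gamma x y); auto. }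
  destruct Hlub as [Hub _]. set (Q := qh_length (sector al) gamma) in *.
  pose proof Hg as [_ [Hg1 [Hin _]]].
  assert (HR1: 0 < cnorm y) by (rewrite <- Hg1; apply (cnorm_pos al); apply Hin; lra).
  assert (Hs: 0 < sin (al/2)) by (apply sin_gt_0; pose proof PI_RGT_0; lra).
  set (K := / sin (al/2) * ln (cnorm x / cnorm y)).
  set (c := (cnorm x - cnorm y) / cnorm y).
  destruct (Rle_lt_dec K Q) as [|HQ]; auto. exfalso.
  destruct (INR_unbounded (K * c / (K - Q))) as [N0 HN0].
  set (N := S N0).
  assert (HN: INR N0 < INR N) by (apply lt_INR; unfold N; lia).
  assert (HNp: 0 < INR N) by (apply lt_0_INR; unfold N; lia).
  destruct (main_sum al gamma x y N Hal Hg Hxy ltac:(unfold N; lia)) as [v [Hv Hle]].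
  specialize (Hub v Hv).
  replace (/ sin (al / 2) * (1 - (cnorm x - cnorm y) / INR N / cnorm y) * ln (cnorm x / cnorm y))
    with (K - K * c / INR N) in Hle by (unfold K, c; field; lra).
  assert (K * c / (K - Q) < INR N) by lra.
  assert (K * c < (K - Q) * INR N).
  { apply (Rmult_lt_compat_r (K - Q)) in H; [|lra].
    replace (K * c / (K - Q) * (K - Q)) with (K * c) in H by (field; lra). lra. }
  assert (K * c / INR N < K - Q).
  { apply (Rmult_lt_reg_r (INR N)); auto. replace (K * c / INR N * INR N) with (K * c) by (field; lra). lra. }
  lra.
Qed.

Lemma segment al x y : 0 < al <= PI -> sector al x -> sector al y ->
  exists gamma, curve_in (sector al) gamma x y /\ rectifiable gamma.
Proof.
  intros Hal Hx Hy.
  set (gamma := fun t => (fst x + t * (fst y - fst x), snd x + t * (snd y - snd x))).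
  assert (Hd: forall s t, cdist (gamma s) (gamma t) = Rabs (s - t) * cdist y x).
  { intros s t. unfold gamma, cdist; cbn [fst snd].
    replace ((fst x + s * (fst y - fst x) - (fst x + t * (fst y - fst x))) ^ 2 +
             (snd x + s * (snd y - snd x) - (snd x + t * (snd y - snd x))) ^ 2)
      with (((s - t) * (s - t)) * ((fst y - fst x) ^ 2 + (snd y - snd x) ^ 2)) by ring.
    rewrite sqrt_mult_alt by (pose proof (Rle_0_sqr (s-t)); unfold Rsqr in *; lra).
    f_equal. apply sqrt_Rsqr_abs. }
  exists gamma. destruct x as [x1 x2]. destruct y as [y1 y2].
  pose proof (sector_fwd al _ Hal Hx) as [X1 X2]. pose proof (sector_fwd al _ Hal Hy) as [Y1 Y2].
  unfold L1, L2 in *; cbn [fst snd] in *.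
  split; [split; [|split; [|split]]|].
  - unfold gamma; cbn [fst snd]. f_equal; ring.
  - unfold gamma; cbn [fst snd]. f_equal; ring.
  - intros t Ht. apply sector_bwd; auto; unfold gamma, L1, L2; cbn [fst snd].
    + replace (x2 + t * (y2 - x2)) with ((1-t) * x2 + t * y2) by ring.
      destruct (Rle_lt_dec t 0).
      * assert (t = 0) by lra. subst. lra.
      * assert (0 <= (1-t)*x2) by (apply Rmult_le_pos; lra).
        assert (0 < t * y2) by (apply Rmult_lt_0_compat; lra). lra.
    + replace ((x1 + t * (y1 - x1)) * sin al - (x2 + t * (y2 - x2)) * cos al)
        with ((1-t) * (x1 * sin al - x2 * cos al) + t * (y1 * sin al - y2 * cos al)) by ring.
      destruct (Rle_lt_dec t 0).
      * assert (t = 0) by lra. subst. lra.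
      * assert (0 <= (1-t)*(x1 * sin al - x2 * cos al)) by (apply Rmult_le_pos; lra).
        assert (0 < t * (y1 * sin al - y2 * cos al)) by (apply Rmult_lt_0_compat; lra). lra.
  - intros t Ht eps Heps. set (D := cdist (y1, y2) (x1, x2)).
    pose proof (cdist_ge0 (y1,y2) (x1,x2)). fold D in H.
    exists (eps / (D + 1)). split. apply Rdiv_lt_0_compat; lra.
    intros s Hs Hst. rewrite Hd. fold D.
    apply Rle_lt_trans with (eps / (D+1) * D).
    + apply Rmult_le_compat_r; lra.
    + apply (Rmult_lt_reg_r (D+1)); [lra|]. 
      replace (eps / (D + 1) * D * (D + 1)) with (eps * D) by (field; lra). nra.
  - exists (cdist (y1,y2) (x1,x2)). intros n p Hp.
    destruct Hp as [P0 [P1 Pm]].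
    rewrite (sumR_ext n _ (fun i => (fun j => - p j * cdist (y1,y2) (x1,x2)) i - (fun j => - p j * cdist (y1,y2) (x1,x2)) (S i))).
    + rewrite sumR_tele. rewrite P0, P1. lra.
    + intros i Hi. rewrite Hd. specialize (Pm i Hi). rewrite Rabs_right by lra. ring.
Qed.

Theorem lemma5p3 (alpha : R) (x y : pt) :
  0 < alpha <= PI ->
  sector alpha x -> sector alpha y ->
  cnorm y <= cnorm x ->
  k_dist (sector alpha) x y >= / sin (alpha / 2) * ln (cnorm x / cnorm y).
Proof.
  intros Hal Hx Hy Hxy. unfold k_dist.
  match goal with |- Inf_R ?W >= _ => set (V := W) end.
  assert (Hlow: forall v, V v -> / sin (alpha / 2) * ln (cnorm x / cnorm y) <= v).
  { intros v [g [Hg [Hr ->]]]. apply (qh_ge alpha g x y); auto. }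
  assert (HV: is_glb_R V (Inf_R V)).
  { apply glb_exists.
    - destruct (segment alpha x y Hal Hx Hy) as [g [Hg Hr]]. exists (qh_length (sector alpha) g), g; auto.
    - eexists; exact Hlow. }
  destruct HV as [_ H]. apply Rle_ge. apply H. exact Hlow.
Qed.
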